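(* Let $\vec{k}=(k_1,\dots,k_n)$ be a vector of positive integers, let $\mathcal{K}$ be the set of all vectors obtained by permuting the entries of $\vec{k}$, and let $\mathcal{D}_{\mathcal{K}}=\bigcup_{\vec{k}'\in\mathcal{K}}\mathcal{D}_{\vec{k}'}$. For every $\overline{D}\in\mathcal{D}_{\mathcal{K}}$, with sweep map image $D=\Phi(\overline{D})$, we have $$\operatorname{dinv}(\overline{D})=\operatorname{area}(D)\qquad\text{and}\qquad \operatorname{area}(\overline{D})=\operatorname{bounce}(D).$$
   Context: For a vector $\vec{k}=(k_1,\dots,k_n)$ of positive integers put $|\vec{k}|=\sum_i k_i$. A $\vec{k}$-Dyck path is a word $D=\sigma_1\sigma_2\cdots\sigma_N$, $N=|\vec{k}|+n$, consisting of $n$ ''red arrows'' (north/up steps) and $|\vec{k}|$ ''blue arrows'' $W$ (east/down steps), where the $j$-th red arrow from the left is $S^{k_j}$, of length $\ell(S^{k_j})=k_j$; a red arrow $S^{k_j}$ has value $k_j$ and each $W$ has value $-1$. Define ranks $r_1=0$ and $r_{m+1}=r_m+(\text{value of }\sigma_m)$; it is required that $r_m\ge 0$ for all $m$ (then $r_{N+1}=0$). The starting rank of the step $\sigma_m$ is $r(\sigma_m)=r_m$ and its end rank is $\dot r(\sigma_m)=r_{m+1}$. Geometrically (model 3), $D$ is the lattice path from $(0,0)$ to $(N,0)$ never below the horizontal axis, with up steps $(1,k_j)$ and down steps $(1,-1)$, and ranks are the $y$-coordinates of starting points. Equivalently (model 1), $D$ is a lattice path from $(0,0)$ to $(|\vec{k}|,|\vec{k}|)$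 never below $y=x$, with north steps of lengths $k_1,\dots,k_n$ (bottom to top) and unit east steps; the rank of a vertex is $y-x$. Let $\mathcal{D}_{\vec{k}}$ be the set of $\vec{k}$-Dyck paths. For steps $A,B$ of $D$, write $A<B$ if $A$ is to the left of $B$, and $A<^sB$ (sweep order) if $r(A)<r(B)$, or $r(A)=r(B)$ and $B<A$. Sweep map: $\Phi(\overline{D})$ is the word obtained by listing the steps of $\overline{D}$ in increasing sweep order (bottom to top by starting rank, right to left at equal rank). For $\overline{D}\in\mathcal{D}_{\vec{k}}$, $\Phi(\overline{D})$ is a $\vec{k}'$-Dyck path for some rearrangement $\vec{k}'$ of $\vec{k}$, and $\Phi$ is a bijection of $\mathcal{D}_{\mathcal{K}}$ to itself. Area: $\operatorname{area}(D)=\sum_{S} r(S)$, summed over all red arrows $S$ of $D$. Dinv: $\operatorname{dinv}(D)$ is the sum of two parts. (1) Sweep dinv: the number of pairs $(W,S)$ with $W$ a blue arrow, $S$ a red arrow, $W<S$, such that $W$ sweeps $S$, i.e. $W$ intersects $S$ when $W$ is moved to the right past $S$ along a line of slope $\epsilon$, $0<\epsilon\ll1$; equivalently $r(S)\le r(W)\le \dot r(S)$. (2) Red dinv: $\sum_{S_i<S_j}\chi\big(r(S_i)\ge r(S_j)\ \&\ \dot r(S_j)>\dot r(S_i)\big)(\dot r(S_j)-\dot r(S_i))+\sum_{S_i<S_j}\chi\big(r(S_i)<r(S_j)\ \&\ \dot r(S_j)<\dot r(S_i)\big)(\dot r(S_i)-\dot r(S_j))$, over pairs of red arrows. Bounce: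 let $D$ be a $\vec{k}'$-Dyck path with red arrow lengths $k'_1,\dots,k'_n$ (left to right), $|\vec{k}'|=K$. For $0\le x<K$ let $N(x)$ be the number of red arrows preceding the $(x+1)$-st letter $W$ of $D$ (in model 1: the number of north steps before the unique east step starting at abscissa $x$). Build a tableau with $n$ columns, column $j$ having $k'_j+1$ cells whose entries are $t_j,t_j+1,\dots,t_j+k'_j$ from top to bottom, where the top entries $t_j$ are assigned as follows. Set $x_0=0$, $v_0=N(0)$, and give top entry $0$ to columns $1,\dots,v_0$. Recursively, for $i\ge0$, let $h_i$ be the number of cells with entry $i+1$ among the columns filled so far and $x_{i+1}=x_i+h_i$; if $x_{i+1}=K$, stop; otherwise let $v_{i+1}=N(x_{i+1})-N(x_i)$ and give top entry $i+1$ to columns $N(x_i)+1,\dots,N(x_{i+1})$. Then $\operatorname{bounce}(D)=\sum_{i\ge0} i\,v_i$, the sum of the top entries. *)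

(* Defs.v *)
From HB Require Import structures.
From mathcomp Require Import all_boot all_order all_algebra.
Set Implicit Arguments. Unset Strict Implicit. Unset Printing Implicit Defensive.
Import Order.TTheory GRing.Theory Num.Theory.
Local Open Scope ring_scope.

(* A letter of a (k-)Dyck word: a red arrow S^k (north/up step of length k,
   value k) or a blue arrow W (east/down step, value -1). *)
Inductive step : Type := Red of nat | Blue.

Definition is_red (s : step) : bool := if s is Red _ then true else false.
Definition len (s : step) : nat := if s is Red k then k else 0%N.
Definition value (s : step) : int := if s is Red k then k%:Z else -1.

Definition red_lengths (D : seq step) : seq nat :=
  [seq len s | s <- D & is_red s].

(* rank D m = r_{m+1}: starting rank of the letter at (0-based) position m,
   i.e. the sum of the values of the first m letters.  The end rank of the
   letter at position m is rank D m.+1. *)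
Definition rank (D : seq step) (m : nat) : int :=
  \sum_(s <- take m D) value s.

Definition kDyck (kv : seq nat) (D : seq step) : bool :=
  [&& red_lengths D == kv,
      count (fun s => ~~ is_red s) D == sumn kv &
      all (fun m => 0 <= rank D m) (iota 0 (size D).+1)].

Definition in_DK (kv : seq nat) (D : seq step) : Prop :=
  exists kv' : seq nat, perm_eq kv kv' /\ kDyck kv' D.

Definition sweep_le (D : seq step) (i j : nat) : bool :=
  (rank D i < rank D j) || ((rank D i == rank D j) && (j <= i)%N).

Definition sweep (D : seq step) : seq step :=
  [seq nth Blue D i | i <- sort (sweep_le D) (iota 0 (size D))].

Definition area (D : seq step) : int :=
  \sum_(m < size D | is_red (nth Blue D m)) rank D m.

Definition sweep_dinv (D : seq step) : nat :=
  \sum_(a < size D) \sum_(b < size D)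
     [&& (a < b)%N, ~~ is_red (nth Blue D a), is_red (nth Blue D b),
         (rank D b <= rank D a)%R & (rank D a <= rank D b.+1)%R].

Definition red_dinv (D : seq step) : int :=
  \sum_(i < size D) \sum_(j < size D)
    (if [&& (i < j)%N, is_red (nth Blue D i) & is_red (nth Blue D j)] then
       (if (rank D j <= rank D i) && (rank D i.+1 < rank D j.+1)
        then rank D j.+1 - rank D i.+1 else 0)
     + (if (rank D i < rank D j) && (rank D j.+1 < rank D i.+1)
        then rank D i.+1 - rank D j.+1 else 0)
     else 0).

Definition dinv (D : seq step) : int := (sweep_dinv D)%:Z + red_dinv D.

Definition blue_pos (D : seq step) : seq nat :=
  [seq i <- iota 0 (size D) | ~~ is_red (nth Blue D i)].

Definition Nb (D : seq step) (x : nat) : nat :=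
  count is_red (take (nth 0%N (blue_pos D) x) D).

(* h_i: number of cells with entry i+1 among the filled columns, where
   column j (0-based) has entries tops_j, ..., tops_j + k'_j. *)
Definition hcells (D : seq step) (i : nat) (tops : seq nat) : nat :=
  \sum_(j < size tops)
     ((nth 0%N tops j <= i.+1)%N && (i.+1 <= nth 0%N tops j + nth 0%N (red_lengths D) j)%N).

(* One iteration: current index i, current x = x_i, current top entries of the
   filled columns 1..N(x_i).  Fuel bounds the number of iterations. *)
Fixpoint bounce_tops (D : seq step) (fuel i x : nat) (tops : seq nat) : seq nat :=
  match fuel with
  | 0%N => tops
  | fuel'.+1 =>
      let x' := (x + hcells D i tops)%N in
      if (sumn (red_lengths D) <= x')%N then tops
      else bounce_tops D fuel' i.+1 x' (tops ++ nseq (Nb D x' - Nb D x) i.+1)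
  end.

Definition bounce (D : seq step) : nat :=
  sumn (bounce_tops D (sumn (red_lengths D)).+1 0 0 (nseq (Nb D 0) 0%N)).

(* Main.v *)
Require Import Defs.
From HB Require Import structures.
From mathcomp Require Import all_boot all_order all_algebra zify.
Import Order.TTheory GRing.Theory Num.Theory.
Set Implicit Arguments. Unset Strict Implicit. Unset Printing Implicit Defensive.

Definition red (D : seq step) i := is_red (nth Blue D i).
Definition rk (D : seq step) m : nat := absz (rank D m).

Lemma rank0 D : rank D 0 = 0%R.
Proof. by rewrite /rank take0 big_nil. Qed.

Lemma rankS D m : m < size D -> rank D m.+1 = (rank D m + value (nth Blue D m))%R.
Proof. by move=> hm; rewrite /rank (take_nth Blue hm) -cats1 big_cat big_seq1. Qed.

Lemma rank_over D m : size D <= m -> rank D m = rank D (size D).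
Proof. by move=> hm; rewrite /rank take_oversize // take_size. Qed.

Lemma sum_int_count m n a b :
  \sum_(m <= y < n) (a <= y < b) = minn b n - maxn a m.
Proof.
elim: n => [|n IH]; first by rewrite big_geq //; lia.
case: (leqP m n) => hmn; last by rewrite big_geq //; lia.
rewrite big_nat_recr //= IH.
case: (leqP a n) => /=; case: (ltnP n b) => /=; lia.
Qed.

Lemma sum_eqS m n x : \sum_(m <= y < n) (x == y.+1) = (m < x <= n).
Proof.
elim: n => [|n IH]; first by rewrite big_geq //; lia.
case: (leqP m n) => hmn; last by rewrite big_geq //; lia.
rewrite big_nat_recr //= IH.
case: (eqVneq x n.+1) => [->|ne] /=; first by lia.
rewrite addn0 (leq_eqVlt x n.+1) (negbTE ne) /= ltnS. by [].
Qed.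

Lemma sum_lt m n h : \sum_(m <= y < n) (y < h) = minn h n - m.
Proof.
rewrite -[RHS](_ : minn h n - maxn 0 m = _); last by rewrite max0n.
by rewrite -sum_int_count.
Qed.

Definition sw D := sort (sweep_le D) (iota 0 (size D)).
Definition slt D i j := sweep_le D i j && (i != j).

Lemma sweep_le_total D : total (sweep_le D).
Proof.
move=> i j; rewrite /sweep_le.
case: (ltrgtP (rank D i) (rank D j)) => //= _.
by rewrite leq_total.
Qed.

Lemma sweep_le_trans D : transitive (sweep_le D).
Proof.
move=> j i k; rewrite /sweep_le.
case/orP=> [h1|/andP[/eqP e1 h1]]; case/orP=> [h2|/andP[/eqP e2 h2]].
- by rewrite (lt_trans h1 h2).
- by rewrite -e2 h1.
- by rewrite e1 h2.
- by rewrite e1 e2 eqxx (leq_trans h2 h1) orbT.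
Qed.

Lemma sweep_le_anti D i j : sweep_le D i j -> sweep_le D j i -> i = j.
Proof.
rewrite /sweep_le.
case/orP=> [h1|/andP[/eqP e1 h1]]; case/orP=> [h2|/andP[/eqP e2 h2]].
- by move: (lt_trans h1 h2); rewrite ltxx.
- by move: h1; rewrite e2 ltxx.
- by move: h2; rewrite e1 ltxx.
- by apply/eqP; rewrite eqn_leq h1 h2.
Qed.

Lemma sw_perm D : perm_eq (sw D) (iota 0 (size D)).
Proof. by rewrite /sw perm_sort perm_refl. Qed.

Lemma sw_uniq D : uniq (sw D).
Proof. by rewrite (perm_uniq (sw_perm D)) iota_uniq. Qed.

Lemma size_sw D : size (sw D) = size D.
Proof. by rewrite size_sort size_iota. Qed.

Lemma sw_sorted D : sorted (sweep_le D) (sw D).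
Proof. exact: (sort_sorted (@sweep_le_total D)). Qed.

Lemma mem_sw D j : (j \in sw D) = (j < size D).
Proof. by rewrite (perm_mem (sw_perm D)) mem_iota. Qed.

Lemma sweep_le_refl D : reflexive (sweep_le D).
Proof. by move=> i; rewrite /sweep_le eqxx leqnn orbT. Qed.

Lemma take_sw D m : m < size D ->
  perm_eq (take m (sw D)) [seq j <- iota 0 (size D) | slt D j (nth 0 (sw D) m)].
Proof.
move=> hm; apply: uniq_perm.
- exact: take_uniq (sw_uniq D).
- exact: filter_uniq (iota_uniq _ _).
have hs : m < size (sw D) by rewrite size_sw.
have hle := sorted_leq_nth (@sweep_le_trans D) (@sweep_le_refl D) 0 (sw_sorted D).
move=> x; rewrite mem_filter mem_iota /= add0n /slt.
apply/idP/idP.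
- move=> hx.
  have hxs : x \in sw D by apply: mem_take hx.
  have hi : index x (sw D) < m by rewrite -in_take.
  have hiS : index x (sw D) < size (sw D) by rewrite index_mem.
  rewrite -mem_sw hxs andbT -(nth_index 0 hxs).
  rewrite hle ?inE ?(ltnW hi) //=.
  by rewrite nth_uniq ?sw_uniq // neq_ltn hi.
- case/andP => /andP[hle1 hne] hxN.
  have hxs : x \in sw D by rewrite mem_sw.
  rewrite in_take //; rewrite ltnNge; apply/negP => hmi.
  have hiS : index x (sw D) < size (sw D) by rewrite index_mem.
  have := hle m (index x (sw D)) hs hiS hmi.
  rewrite nth_index // => hle2.
  by move: hne; rewrite (sweep_le_anti hle1 hle2) eqxx.
Qed.

Lemma big_take_sw (R : Type) (idx : R) (op : Monoid.com_law idx) D m (F : nat -> R) :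
  m < size D ->
  \big[op/idx]_(j <- take m (sw D)) F j =
  \big[op/idx]_(j < size D | slt D j (nth 0 (sw D) m)) F j.
Proof.
move=> hm; rewrite (perm_big _ (take_sw hm)) big_filter.
have -> : iota 0 (size D) = index_iota 0 (size D) by rewrite /index_iota subn0.
by rewrite big_mkord.
Qed.

Lemma size_sweep D : size (sweep D) = size D.
Proof. by rewrite size_map size_sw. Qed.

Lemma sweep_nth D m : m < size D -> nth Blue (sweep D) m = nth Blue D (nth 0 (sw D) m).
Proof. by move=> hm; rewrite (nth_map 0) // size_sw. Qed.

Lemma rank_sweep D m : m < size D ->
  rank (sweep D) m = (\sum_(j < size D | slt D j (nth 0 (sw D) m)) value (nth Blue D j))%R.
Proof.
move=> hm; rewrite /rank /sweep -/(sw D) -map_take big_map.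
exact: big_take_sw.
Qed.

Lemma area_sweep D : area (sweep D) =
  (\sum_(s < size D | is_red (nth Blue D s))
     \sum_(j < size D | slt D j s) value (nth Blue D j))%R.
Proof.
rewrite /area -(big_mkord (fun m => is_red (nth Blue (sweep D) m)) (fun m => rank (sweep D) m)).
rewrite size_sweep.
rewrite big_nat_cond.
rewrite (eq_big (fun m => (0 <= m < size D) && is_red (nth Blue D (nth 0 (sw D) m)))
   (fun m => (\sum_(j < size D | slt D j (nth 0 (sw D) m)) value (nth Blue D j))%R)); first last.
- by move=> i /andP[/andP[_ hi] _]; rewrite rank_sweep.
- move=> i; case hi: (0 <= i < size D) => //=; rewrite sweep_nth //; by case/andP: hi.
rewrite -big_nat_cond.
have E := @big_nth int 0%R +%R nat 0 (sw D) (fun s => is_red (nth Blue D s))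
   (fun s => \sum_(j < size D | slt D j s) value (nth Blue D j))%R.
rewrite /= size_sw in E; rewrite -E.
rewrite (perm_big _ (sw_perm D)).
have -> : iota 0 (size D) = index_iota 0 (size D) by rewrite /index_iota subn0.
by rewrite big_mkord.
Qed.

Definition Pp (s t a a' c c' : nat) := (c'-c) * ((c<a) + ((s<t) && (c==a))).
Definition Te (s t a a' c c' : nat) := (s<t) * (((c<=a)&&(a'<c')) * (c'-a') + ((a<c)&&(c'<a')) * (a'-c')).
Definition Nn (s t a a' c c' : nat) := (minn c' a.-1 - c) + (0<a) * ((s<t) && (c <= a.-1 < c'))
   + (t<s) * (minn c' a' - maxn c a.-1) + Te s t a a' c c'.
Lemma pair_lt s t a a' c c' : s < t -> a < a' -> c < c' ->
  Pp s t a a' c c' + Pp t s c c' a a' = Nn s t a a' c c' + Nn t s c c' a a'.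
Proof. rewrite /Pp /Nn /Te => hst h1 h2.
rewrite hst (ltnNge t s) (ltnW hst) /=.
case: (ltngtP a c) => hac; case: (ltngtP a' c') => h3; case: (posnP a) => h4;
 case: (boolP (c <= a.-1 < c')) => h5; rewrite /= ?mul1n ?mul0n ?muln1 ?muln0 ?addn0 ?add0n.
all: lia.
Qed.


Lemma Posz_sum (I : Type) (r : seq I) (P : pred I) (F : I -> nat) :
  Posz (\sum_(i <- r | P i) F i) = (\sum_(i <- r | P i) Posz (F i))%R.
Proof. by apply: (big_morph Posz PoszD). Qed.

Lemma sum_suffix n s (F : nat -> nat) :
  \sum_(j < n) ((s < j) * F j) = \sum_(s.+1 <= j < n) F j.
Proof.
rewrite -(big_mkord xpredT (fun j => (s < j) * F j)).
case: (leqP s.+1 n) => h.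
  rewrite (big_cat_nat (leq0n s.+1) h) /= big_nat_cond big1 ?add0n.
    by apply: eq_big_nat => j /andP[hj _]; rewrite hj mul1n.
  by move=> j /andP[/andP[_ hj] _]; rewrite ltnNge -ltnS hj.
rewrite [RHS]big_geq; last exact: ltnW.
rewrite big_nat_cond big1 // => j /andP[/andP[_ hj] _].
by rewrite ltnNge (leq_trans (ltnW hj)) // -ltnS.
Qed.

Lemma sum_prefix n b (F : nat -> nat) : b <= n ->
  \sum_(j < n) ((j < b) * F j) = \sum_(0 <= j < b) F j.
Proof.
move=> h; rewrite -(big_mkord xpredT (fun j => (j < b) * F j)).
rewrite (big_cat_nat (leq0n b) h) /=.
rewrite [X in _ + X]big_nat_cond [X in _ + X]big1 ?addn0.
  by apply: eq_big_nat => j /andP[_ hj]; rewrite hj mul1n.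
by move=> j /andP[/andP[hj _] _]; rewrite ltnNge hj.
Qed.

Definition fle (p q : nat * nat) := p.1 <= q.1.

Lemma fle_trans : transitive fle.
Proof. by move=> q p s; rewrite /fle; apply: leq_trans. Qed.

Lemma filter_le_take (L : seq (nat * nat)) i : sorted fle L ->
  [seq p <- L | p.1 <= i] = take (count (fun p : nat * nat => p.1 <= i) L) L.
Proof.
elim: L => [|p L IH] //= hs.
have hL : sorted fle L := path_sorted hs.
case: leqP => hp /=; first by rewrite IH.
have hall := order_path_min fle_trans hs.
rewrite add0n (eq_in_filter (a2 := pred0)) ?filter_pred0.
  rewrite (eq_in_count (a2 := pred0)) ?count_pred0 ?take0 //.
  all: move=> q hq /=; move/allP: hall => /(_ q hq); rewrite /fle => hq1.
  all: by apply/negbTE; rewrite -ltnNge (leq_trans hp).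
Qed.

Lemma filter_le_succ (L : seq (nat * nat)) i : sorted fle L ->
  [seq p <- L | p.1 <= i.+1] = [seq p <- L | p.1 <= i] ++ [seq p <- L | p.1 == i.+1].
Proof.
elim: L => [|p L IH] //= hs.
have hL : sorted fle L := path_sorted hs.
have hall := order_path_min fle_trans hs.
case: (ltngtP p.1 i.+1) => hp /=.
- by rewrite -ltnS hp IH.
- have hi : i < p.1 by apply: ltn_trans hp.
  rewrite leqNgt hi /=.
  have e0 : forall a : nat * nat -> bool, (forall q : nat * nat, q.1 > i.+1 -> a q = false) ->
     [seq q <- L | a q] = [::].
    move=> a ha; rewrite (eq_in_filter (a2 := pred0)) ?filter_pred0 // => q hq.
    move/allP: hall => /(_ q hq); rewrite /fle => hq1; apply: ha; exact: leq_trans hp hq1.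
  rewrite !e0 // => q hq.
  + by rewrite eqn_leq leqNgt hq.
  + by rewrite leqNgt (ltn_trans (ltnSn i) hq).
  + by rewrite leqNgt hq.
- rewrite hp ltnn /=.
  rewrite (eq_in_filter (s := L) (a1 := fun q => q.1 <= i) (a2 := pred0)) ?filter_pred0 /=.
    congr (_ :: _); apply: eq_in_filter => q hq.
    move/allP: hall => /(_ q hq); rewrite /fle hp => hq1.
    by rewrite eqn_leq hq1 andbT.
  move=> q hq /=; move/allP: hall => /(_ q hq); rewrite /fle hp => hq1.
  by apply/negbTE; rewrite -ltnNge.
Qed.

Lemma map_fst_eq (L : seq (nat * nat)) a :
  map fst [seq p <- L | p.1 == a] = nseq (count (fun p : nat * nat => p.1 == a) L) a.
Proof.
elim: L => [|p L IH] //=; case: eqP => [e|_] /=; by rewrite IH ?e.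
Qed.

Lemma nth_blue_pos (E : seq step) m : m < size E -> ~~ is_red (nth Blue E m) ->
  nth 0 (blue_pos E) (count (fun s => ~~ is_red s) (take m E)) = m.
Proof.
move=> hm hb; rewrite /blue_pos.
have -> : iota 0 (size E) = iota 0 m ++ m :: iota m.+1 (size E - m.+1).
  by rewrite -{1}(subnKC (ltnW hm)) iotaD add0n -(subnSK hm).
rewrite filter_cat nth_cat size_filter -(map_nth_iota0 Blue (ltnW hm)) count_map.
by rewrite ltnn subnn /= hb.
Qed.

Lemma count_take_sweep D (a : pred step) m : m < size D ->
  count a (take m (sweep D)) = \sum_(j < size D | slt D j (nth 0 (sw D) m)) a (nth Blue D j).
Proof.
move=> hm; rewrite /sweep -/(sw D) -map_take count_map -sum1_count big_mkcond /=.
rewrite (eq_bigr (fun j => nat_of_bool (a (nth Blue D j)))); last by move=> j _; case: (a _).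
exact: big_take_sw.
Qed.

Definition xb D i := \sum_(j < size D) (~~ red D j && (rk D j <= i)).
Definition LL D := [seq (rk D j, len (nth Blue D j)) | j <- [seq j <- sw D | red D j]].
Definition tops D i := map fst [seq p <- LL D | p.1 <= i].

Section Closed.
Variable D : seq step.
Local Notation N := (size D).
Hypothesis Hnn : forall m, (0 <= rank D m)%R.
Hypothesis Hend : rank D N = 0%R.
Hypothesis Hpos : forall i, i < N -> red D i -> 0 < len (nth Blue D i).
Local Notation r := (rk D).
Local Notation rd := (red D).

Lemma rE m : Posz (r m) = rank D m.
Proof. by rewrite /rk abszE ger0_norm. Qed.

Lemma r0 : r 0 = 0.
Proof. by rewrite /rk rank0. Qed.
Lemma rN : r N = 0.
Proof. by rewrite /rk Hend. Qed.

Lemma r_red i : i < N -> rd i -> r i.+1 = r i + len (nth Blue D i).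
Proof.
move=> hi; rewrite /red; case E: (nth Blue D i) => [k|] //= _.
apply/eqP; rewrite -eqz_nat PoszD !rE rankS // E /=. by [].
Qed.

Lemma r_blue i : i < N -> ~~ rd i -> r i = (r i.+1).+1.
Proof.
move=> hi; rewrite /red; case E: (nth Blue D i) => [k|] //= _.
apply/eqP; rewrite -eqz_nat -addn1 PoszD !rE rankS // E /=.
by rewrite -addrA addNr addr0.
Qed.

Lemma cross p q y : p <= q <= N ->
 \sum_(p <= i < q) (rd i && (r i <= y < r i.+1)) + (y < r p) =
 \sum_(p <= i < q) (~~ rd i && (r i == y.+1)) + (y < r q).
Proof.
case/andP; elim: q => [|q IH] hpq hqN.
  by move: hpq; rewrite leqn0 => /eqP ->; rewrite !big_geq.
case: (ltngtP p q.+1) hpq => // [hpq|<-] _; last by rewrite !big_geq.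
rewrite !big_nat_recr //=.
have IH' := IH hpq (ltnW hqN).
case hr: (rd q) => /=.
  rewrite (r_red hqN hr).
  move: IH'; case: (leqP (r q) y) => /=; case: (ltnP y (r q + len (nth Blue D q))) => /=; try lia.
rewrite (r_blue hqN (negbT hr)).
move: IH'; rewrite (r_blue hqN (negbT hr)); case: (eqVneq (r q.+1) y) => [->|ne] /=.
  rewrite eqxx /=. case: ltnP => /=; lia.
rewrite eqSS (negbTE ne) /=.
have: (y < (r q.+1).+1) = (y < r q.+1). 
  by rewrite ltnS leq_eqVlt eq_sym (negbTE ne).
move=> ->; lia.
Qed.

Lemma blue_r j : j < N -> ~~ rd j -> 0 < r j.
Proof. by move=> hj hb; rewrite (r_blue hj hb). Qed.

Lemma cross_full y :
  \sum_(j < N) (~~ rd j && (r j == y.+1)) = \sum_(t < N) (rd t && (r t <= y < r t.+1)).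
Proof.
have := @cross 0 N y; rewrite leq0n leqnn r0 rN !addn0 => /(_ isT).
by rewrite !big_mkord => ->.
Qed.

Lemma partA h : \sum_(j < N) (~~ rd j && (r j < h)) =
  \sum_(t < N) rd t * (minn (r t.+1) h.-1 - r t).
Proof.
transitivity (\sum_(j < N) \sum_(0 <= y < h.-1) (~~ rd j && (r j == y.+1))).
  apply: eq_bigr => j _; case hb: (rd j) => /=; first by rewrite big1.
  have hp := blue_r (ltn_ord j) (negbT hb).
  rewrite sum_eqS hp /=; case: h => [|h] //=; by rewrite leqNgt hp.
rewrite exchange_big /=.
under eq_bigr => y _ do rewrite cross_full.
rewrite exchange_big /=; apply: eq_bigr => t _.
case: (rd t) => /=; last by rewrite big1.
by rewrite mul1n sum_int_count maxn0.
Qed.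

Lemma partB s : s < N -> rd s ->
  \sum_(s.+1 <= j < N) (~~ rd j && (r j == r s)) =
  (0 < r s) * (1 + \sum_(s.+1 <= t < N) (rd t && (r t <= (r s).-1 < r t.+1))).
Proof.
move=> hs hr; case E: (r s) => [|h] /=.
  rewrite big_nat_cond big1 // => j /andP[/andP[_ hj] _].
  case hb: (rd j) => //=; by rewrite eqn0Ngt (blue_r hj) ?hb.
have := @cross s.+1 N h; rewrite hs leqnn rN addn0 => /(_ isT).
rewrite (r_red hs hr) E.
have -> : h < h.+1 + len (nth Blue D s) by lia.
move=> <-; lia.
Qed.

Lemma partC b : b < N -> rd b ->
  \sum_(0 <= a < b) (~~ rd a && (r b <= r a <= r b.+1)) + (0 < r b) =
  \sum_(0 <= t < b) rd t * (minn (r t.+1) (r b.+1) - maxn (r t) (r b).-1).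
Proof.
move=> hb hr.
have hlt : r b < r b.+1 by rewrite (r_red hb hr); have := Hpos hb hr; lia.
transitivity (\sum_(0 <= a < b) \sum_((r b).-1 <= y < r b.+1) (~~ rd a && (r a == y.+1))
   + \sum_((r b).-1 <= y < r b.+1) (y < r b)).
  congr (_ + _); last by rewrite sum_lt; lia.
  rewrite big_nat_cond [RHS]big_nat_cond; apply: eq_bigr => a /andP[/andP[_ ha] _].
  have haN : a < N by apply: ltn_trans hb.
  case hbl: (rd a) => /=; first by rewrite big1.
  have hp := blue_r haN (negbT hbl).
  rewrite sum_eqS; case: (r b) => [|h] //=; by rewrite hp.
rewrite exchange_big /= -big_split /=.
transitivity (\sum_((r b).-1 <= y < r b.+1) \sum_(0 <= t < b) (rd t && (r t <= y < r t.+1))).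
  apply: eq_bigr => y _.
  have := @cross 0 b y; rewrite leq0n (ltnW hb) r0 => /(_ isT).
  by rewrite addn0 => ->.
rewrite exchange_big /=; apply: eq_bigr => t _.
case: (rd t) => /=; last by rewrite big1.
by rewrite mul1n sum_int_count.
Qed.

Lemma slt_r j s : slt D j s = (r j < r s) || ((s < j) && (r j == r s)).
Proof.
rewrite /slt /sweep_le -!rE ltz_nat eqz_nat.
case: (ltngtP (r j) (r s)) => //= h.
- by apply/eqP => E; move: h; rewrite E ltnn.
- by rewrite andbF.
- by rewrite andbT ltn_neqAle eq_sym andbC.
Qed.

Lemma E2 s : \sum_(j < N) slt D j s * (rd j * (r j.+1 - r j)) =
  \sum_(t < N) rd t * ((r t.+1 - r t) * ((r t < r s) + ((s < t) && (r t == r s)))).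
Proof.
apply: eq_bigr => j _; rewrite slt_r.
case: (ltngtP (r j) (r s)) => h /=; case: (s < j) => /=;
  rewrite ?mul1n ?muln1 ?mul0n ?muln0 ?addn0 ?add0n ?orbT ?orbF //; lia.
Qed.

Lemma E3 s : \sum_(j < N) (slt D j s && ~~ rd j) =
  \sum_(j < N) (~~ rd j && (r j < r s)) + \sum_(s.+1 <= j < N) (~~ rd j && (r j == r s)).
Proof.
rewrite -sum_suffix -big_split; apply: eq_bigr => j _; rewrite slt_r.
case: (ltngtP (r j) (r s)) => h /=; case: (s < j) => /=; case: (rd j) => //=.
Qed.

Lemma E3g (b : nat -> bool) s : \sum_(j < N) (slt D j s && b j) =
  \sum_(j < N) (b j && (r j < r s)) + \sum_(s.+1 <= j < N) (b j && (r j == r s)).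
Proof.
rewrite -sum_suffix -big_split; apply: eq_bigr => j _; rewrite slt_r.
case: (ltngtP (r j) (r s)) => h /=; case: (s < j) => /=; case: (b j) => //=.
Qed.

Lemma R_formula s : s < N -> rd s ->
 (\sum_(j < N | slt D j s) value (nth Blue D j) + Posz (0 < r s)
   + Posz (\sum_(t < N) rd t * ((minn (r t.+1) (r s).-1 - r t)
                 + (0 < r s) * ((s < t) && (r t <= (r s).-1 < r t.+1))))
 = Posz (\sum_(t < N) rd t * ((r t.+1 - r t) * ((r t < r s) + ((s < t) && (r t == r s))))))%R.
Proof.
move=> hs hr.
have E1 : (\sum_(j < N | slt D j s) value (nth Blue D j) =
   Posz (\sum_(j < N) slt D j s * (rd j * (r j.+1 - r j)))
   - Posz (\sum_(j < N) (slt D j s && ~~ rd j)))%R.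
  rewrite !Posz_sum -sumrB big_mkcond /=; apply: eq_bigr => j _.
  case: (slt D j s) => /=; last by rewrite mul0n subrr.
  have hj := ltn_ord j.
  have hrj := @r_red j hj; move: hrj; rewrite /red; case E: (nth Blue D j) => [k|] /= hrj.
    rewrite hrj //=; by rewrite !mul1n addKn subr0.
  by rewrite mul0n sub0r.
rewrite E1 E2 E3 partA (partB hs hr).
have -> : \sum_(t < N) rd t * ((minn (r t.+1) (r s).-1 - r t)
                 + (0 < r s) * ((s < t) && (r t <= (r s).-1 < r t.+1))) =
    \sum_(t < N) rd t * (minn (r t.+1) (r s).-1 - r t)
    + (0 < r s) * \sum_(s.+1 <= t < N) (rd t && (r t <= (r s).-1 < r t.+1)).
  rewrite -sum_suffix big_distrr -big_split /=; apply: eq_bigr => t _.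
  case: (rd t); case: (0 < r s); case: (s < t); rewrite /= ?mul1n ?mul0n ?muln0 ?muln1 ?addn0 ?add0n //.
case: (0 < r s) => /=; rewrite ?mul1n ?mul0n ?addn0; lia.
Qed.

Lemma sweep_formula : sweep_dinv D + \sum_(b < N) rd b * (0 < r b) =
  \sum_(b < N) rd b * \sum_(t < N) rd t * ((t < b) * (minn (r t.+1) (r b.+1) - maxn (r t) (r b).-1)).
Proof.
rewrite /sweep_dinv exchange_big -big_split; apply: eq_bigr => b _ /=.
have hb := ltn_ord b.
case hr: (rd b); last first.
  rewrite /red in hr; rewrite big1; last by move=> a _; rewrite hr /= !andbF.
  by rewrite /= !mul0n.
have -> : \sum_(a < N) [&& a < b, ~~ is_red (nth Blue D a), is_red (nth Blue D b),
      (rank D b <= rank D a)%R & (rank D a <= rank D b.+1)%R] =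
    \sum_(a < N) ((a < b) * (~~ rd a && (r b <= r a <= r b.+1))).
  have hr2 : is_red (nth Blue D b) = true := hr.
  apply: eq_bigr => a _; rewrite hr2 -!rE !lez_nat.
  rewrite /red; case: (a < b); case: (is_red _); by rewrite /= ?mul1n ?mul0n.
rewrite (@sum_prefix N b (fun a => ~~ rd a && (r b <= r a <= r b.+1)) (ltnW hb)).
rewrite !mul1n (partC hb hr).
rewrite -(@sum_prefix N b (fun t => rd t * (minn (r t.+1) (r b.+1) - maxn (r t) (r b).-1)) (ltnW hb)).
apply: eq_bigr => t _; by rewrite mulnCA.
Qed.

Lemma reddinv_formula : red_dinv D =
  Posz (\sum_(s < N) \sum_(t < N) rd s * (rd t * Te s t (r s) (r s.+1) (r t) (r t.+1))).
Proof.
rewrite /red_dinv Posz_sum; apply: eq_bigr => s _; rewrite Posz_sum; apply: eq_bigr => t _.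
rewrite -!rE !lez_nat !ltz_nat /Te /red.
case: (s < t); case: (is_red (nth Blue D s)); case: (is_red (nth Blue D t));
  rewrite /= ?mul0n ?muln0 //.
case: ifP => h1; case: ifP => h2; rewrite ?h1 ?h2 /= ?mul1n ?mul0n ?addn0 ?add0n ?addr0 ?add0r //; lia.
Qed.

Lemma sum_sym (G H : nat -> nat -> nat) :
  (forall s t, s < N -> t < N -> G s t + G t s = H s t + H t s) ->
  \sum_(s < N) \sum_(t < N) G s t = \sum_(s < N) \sum_(t < N) H s t.
Proof.
move=> hGH.
have dbl : forall K : nat -> nat -> nat,
   \sum_(s < N) \sum_(t < N) (K s t + K t s) =
   \sum_(s < N) \sum_(t < N) K s t + \sum_(s < N) \sum_(t < N) K s t.
  move=> K; under eq_bigr => s _ do rewrite big_split.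
  by rewrite big_split /= [X in _ + X = _]exchange_big.
have : \sum_(s < N) \sum_(t < N) (G s t + G t s) = \sum_(s < N) \sum_(t < N) (H s t + H t s).
  by apply: eq_bigr => s _; apply: eq_bigr => t _; apply: hGH.
rewrite !dbl; lia.
Qed.

Lemma r_lt s : s < N -> rd s -> r s < r s.+1.
Proof. by move=> hs hr; rewrite (r_red hs hr); have := Hpos hs hr; lia. Qed.

Lemma pairs_main :
  \sum_(s < N) \sum_(t < N) rd s * (rd t * Pp s t (r s) (r s.+1) (r t) (r t.+1)) =
  \sum_(s < N) \sum_(t < N) rd s * (rd t * Nn s t (r s) (r s.+1) (r t) (r t.+1)).
Proof.
apply: (sum_sym (G := fun s t => rd s * (rd t * Pp s t (r s) (r s.+1) (r t) (r t.+1)))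
                (H := fun s t => rd s * (rd t * Nn s t (r s) (r s.+1) (r t) (r t.+1)))) => s t hs ht.
case hrs: (rd s); last by rewrite /= ?mul0n ?muln0 ?mul0n ?muln0 ?addn0.
case hrt: (rd t); last by rewrite /= ?mul0n ?muln0 ?mul0n ?muln0 ?addn0.
rewrite /= !mul1n.
have h1 := r_lt hs hrs; have h2 := r_lt ht hrt.
case: (ltngtP s t) => hst.
- exact: pair_lt.
- by rewrite addnC [RHS]addnC; apply: pair_lt.
- subst t; rewrite /Pp /Nn /Te ltnn /=; lia.
Qed.

Lemma main1 : dinv D = area (sweep D).
Proof.
rewrite area_sweep /dinv reddinv_formula.
have A : (\sum_(s < N | is_red (nth Blue D s)) \sum_(j < N | slt D j s) value (nth Blue D j))%R =
  (Posz (\sum_(s < N) rd s * \sum_(t < N) rd t * ((r t.+1 - r t) * ((r t < r s) + ((s < t) && (r t == r s)))))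
   - Posz (\sum_(s < N) rd s * (0 < r s))
   - Posz (\sum_(s < N) rd s * \sum_(t < N) rd t * ((minn (r t.+1) (r s).-1 - r t)
                 + (0 < r s) * ((s < t) && (r t <= (r s).-1 < r t.+1)))))%R.
  rewrite big_mkcond !Posz_sum -!sumrB; apply: eq_bigr => s _.
  case hr: (is_red (nth Blue D s)).
    have hr' : rd s = true := hr.
    rewrite hr' !mul1n; have := R_formula (ltn_ord s) hr'; lia.
  have hr' : rd s = false := hr.
  rewrite hr' !mul0n; lia.
rewrite A.
have P2 : \sum_(s < N) rd s * \sum_(t < N) rd t * ((r t.+1 - r t) * ((r t < r s) + ((s < t) && (r t == r s))))
  = \sum_(s < N) rd s * \sum_(t < N) rd t * ((minn (r t.+1) (r s).-1 - r t)
                 + (0 < r s) * ((s < t) && (r t <= (r s).-1 < r t.+1)))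
  + \sum_(b < N) rd b * \sum_(t < N) rd t * ((t < b) * (minn (r t.+1) (r b.+1) - maxn (r t) (r b).-1))
  + \sum_(s < N) \sum_(t < N) rd s * (rd t * Te s t (r s) (r s.+1) (r t) (r t.+1)).
  under eq_bigr => s _ do rewrite big_distrr.
  under [X in _ = X + _ + _]eq_bigr => s _ do rewrite big_distrr.
  under [X in _ = _ + X + _]eq_bigr => s _ do rewrite big_distrr.
  rewrite -!big_split.
  have := pairs_main; rewrite /Pp /Nn => ->.
  apply: eq_bigr => s _; rewrite /= -!big_split; apply: eq_bigr => t _ /=.
  rewrite !mulnDr. lia.
have := sweep_formula; lia.
Qed.

Local Notation K := (count (fun s => ~~ is_red s) D).

Lemma K_sum : K = \sum_(j < N) ~~ rd j.
Proof.
rewrite -sum1_count (big_nth Blue) big_mkcond big_mkord /=.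
by apply: eq_bigr => j _; rewrite /red; case: (is_red _).
Qed.

Lemma r_bound_aux k : k <= N -> r (N - k) <= \sum_(N - k <= j < N) ~~ rd j.
Proof.
elim: k => [|k IH] hk; first by rewrite subn0 rN.
have ha : N - k.+1 < N by lia.
have e : (N - k.+1).+1 = N - k by lia.
rewrite big_ltn // e.
have hIH := IH (ltnW hk); case hr: (rd (N - k.+1)).
  have h2 := r_red ha hr; rewrite e in h2; rewrite /=; lia.
have h2 := r_blue ha (negbT hr); rewrite e in h2; rewrite /=; lia.
Qed.

Lemma r_le_K m : r m <= K.
Proof.
case: (leqP m N) => hm; last first.
  rewrite /rk rank_over ?(ltnW hm) // -/(rk D N) rN //.
have := r_bound_aux (leq_subr m N); rewrite subKn // => h.
apply: (leq_trans h); rewrite K_sum -(big_mkord xpredT (fun j => nat_of_bool (~~ rd j))).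
rewrite [X in _ <= X](big_cat_nat (leq0n m) hm) /=; exact: leq_addl.
Qed.

Lemma red_lt_K j : j < N -> rd j -> r j < K.
Proof. by move=> hj hr; apply: leq_trans (r_lt hj hr) (r_le_K _). Qed.

Lemma exists_blue p i : p <= N -> i < r p ->
  exists j, [/\ p <= j, j < N, ~~ rd j & r j = i.+1].
Proof.
move=> hp hi.
have := @cross p N i; rewrite hp leqnn rN hi /= addn0 => /(_ isT) E.
have : has (fun j => ~~ rd j && (r j == i.+1)) (index_iota p N).
  apply/negPn/negP => /hasPn H.
  move: E; rewrite [X in _ = X]big_seq [X in _ = X]big1 ?addn1 //.
  by move=> j hj; rewrite (negbTE (H j hj)).
case/hasP => j; rewrite mem_index_iota => /andP[h1 h2] /andP[h3 /eqP h4].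
by exists j.
Qed.

Lemma K_split i : K = xb D i + \sum_(j < N) (~~ rd j && (i < r j)).
Proof.
rewrite K_sum /xb -big_split; apply: eq_bigr => j _ /=.
by case: (rd j); case: leqP.
Qed.

Lemma xb_lt i : xb D i < K -> exists j, [/\ j < N, ~~ rd j & i < r j].
Proof.
rewrite (K_split i) -{1}[xb D i]addn0 ltn_add2l.
case: (pickP (fun j : 'I_N => ~~ rd j && (i < r j))) => [j /andP[h1 h2]|h0].
  by move=> _; exists j.
by rewrite big1 // => j _; rewrite h0.
Qed.

Lemma xb_gt i j : j < N -> ~~ rd j -> i < r j -> xb D i < K.
Proof.
move=> hj hb hi; rewrite (K_split i) -{1}[xb D i]addn0 ltn_add2l.
rewrite (bigD1 (Ordinal hj)) //=.
have -> : red D j = false by apply: negbTE.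
by rewrite hi.
Qed.

Lemma count_LL (a : pred nat) :
  count (fun p : nat * nat => a p.1) (LL D) = \sum_(j < N) (rd j && a (r j)).
Proof.
have /permP hp := perm_filter (red D) (sw_perm D).
rewrite /LL count_map hp count_filter.
rewrite -sum1_count big_mkcond /= -big_filter.
rewrite [X in _ = X](eq_bigr (fun j : 'I_N => nat_of_bool (rd j && a (r j)))) //.
have -> : iota 0 N = index_iota 0 N by rewrite /index_iota subn0.
rewrite big_filter big_mkord; apply: eq_bigr => j _ /=.
by rewrite /preim /predI /= andbC; case: (_ && _).
Qed.


Lemma count_LL2 (a : pred (nat * nat)) :
  count a (LL D) = \sum_(j < N) (rd j && a (r j, len (nth Blue D j))).
Proof.
have /permP hp := perm_filter (red D) (sw_perm D).
rewrite /LL count_map hp count_filter.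
rewrite -sum1_count big_mkcond /= -big_filter.
have -> : iota 0 N = index_iota 0 N by rewrite /index_iota subn0.
rewrite big_filter big_mkord; apply: eq_bigr => j _ /=.
by rewrite /preim /predI /= andbC; case: (_ && _).
Qed.

Lemma Nb_xb i : xb D i < K -> Nb (sweep D) (xb D i) = \sum_(j < N) (rd j && (r j <= i)).
Proof.
move=> hx.
have [j0 [hj0 hb0 hi0]] := xb_lt hx.
have [j1 [_ hj1 hb1 hr1]] := exists_blue (ltnW hj0) hi0.
pose P := fun j => (j < N) && ~~ rd j && (r j == i.+1).
have exP : exists j, P j by exists j1; rewrite /P hj1 hb1 hr1 eqxx.
have ubP : forall j, P j -> j <= N by move=> j /andP[/andP[h _] _]; exact: ltnW.
case: (ex_maxnP exP ubP) => tau /andP[/andP[htN htb] /eqP htr] tmax.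
have hts : tau \in sw D by rewrite mem_sw.
have hm : index tau (sw D) < N by rewrite -(size_sw D) index_mem.
have hm' : index tau (sw D) < size (sweep D) by rewrite size_sweep.
have hnth : nth 0 (sw D) (index tau (sw D)) = tau by rewrite nth_index.
have hbl : ~~ is_red (nth Blue (sweep D) (index tau (sw D))) by rewrite sweep_nth // hnth.
have split2 : forall b : nat -> bool, (forall j, tau < j < N -> b j -> r j = i.+1 -> False) ->
    \sum_(j < N | slt D j tau) b j = \sum_(j < N) (b j && (r j <= i)).
  move=> b hb; rewrite big_mkcond /=.
  rewrite (eq_bigr (fun j : 'I_N => nat_of_bool (slt D j tau && b j))); last first.
    by move=> j _; case: (slt _ _ _).
  rewrite E3g htr [X in _ + X]big_nat_cond [X in _ + X]big1 ?addn0.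
    by apply: eq_bigr => j _; rewrite ltnS.
  move=> j /andP[/andP[h1 h2] _]; case hbj: (b j) => //=.
  case: eqP => // /(hb j); rewrite h1 h2 hbj => /(_ isT isT) [].
have cb : count (fun s => ~~ is_red s) (take (index tau (sw D)) (sweep D)) = xb D i.
  rewrite count_take_sweep // hnth (split2 (fun j => ~~ is_red (nth Blue D j))) //.
  move=> j /andP[h1 h2] hb hr; have := tmax j; rewrite /P h2 hb hr eqxx /= => /(_ isT).
  by rewrite leqNgt h1.
rewrite /Nb -cb (nth_blue_pos hm' hbl) count_take_sweep // hnth (split2 (fun j => is_red (nth Blue D j))) //.
move=> j /andP[h1 h2] hb hr.
have hij : i < r j by rewrite hr.
have [j' [h3 h4 h5 h6]] := exists_blue (ltnW h2) hij.
have := tmax j'; rewrite /P h4 h5 h6 eqxx /= => /(_ isT).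
by rewrite leqNgt (leq_trans h1 h3).
Qed.

Lemma LL_sorted : sorted fle (LL D).
Proof.
rewrite /LL sorted_map.
apply: (sub_sorted _ (sorted_filter (@sweep_le_trans D) _ (sw_sorted D))).
move=> p q; rewrite /relpre /fle /= /sweep_le -!rE ltz_nat eqz_nat.
case/orP => [/ltnW //|/andP[/eqP -> _] //].
Qed.

Lemma red_lengths_sweep : red_lengths (sweep D) = map snd (LL D).
Proof.
rewrite /red_lengths /sweep -/(sw D) /LL filter_map -!map_comp.
by apply: eq_map.
Qed.

Lemma hcells_count (E : seq step) i (M : seq (nat * nat)) c :
  red_lengths E = map snd M -> c <= size M ->
  hcells E i (map fst (take c M)) =
  count (fun p : nat * nat => (p.1 <= i.+1) && (i.+1 <= p.1 + p.2)) (take c M).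
Proof.
move=> hE hc; rewrite /hcells size_map size_takel // hE.
rewrite -sum1_count (big_nth (0, 0)) size_takel // big_mkord [RHS]big_mkcond /=.
apply: eq_bigr => j _.
have hj := ltn_ord j; have hj' : j < size M by apply: leq_trans hj hc.
rewrite (nth_map (0, 0)) ?size_takel // (nth_map (0, 0)) // nth_take //.
Qed.

Lemma hcells_tops i : hcells (sweep D) i (tops D i) = \sum_(j < N) (~~ rd j && (r j == i.+1)).
Proof.
rewrite /tops filter_le_take ?LL_sorted // hcells_count ?red_lengths_sweep ?count_size //.
rewrite -filter_le_take ?LL_sorted // count_filter count_LL2 cross_full.
apply: eq_bigr => j _ /=.
case hr: (rd j) => //=.
rewrite (r_red (ltn_ord j) hr).
by case: (leqP (r j) i) => /=; case: (leqP (r j + _) i); case: (ltnP i (r j + _)) => //=; lia.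
Qed.


Lemma xb_succ i : xb D i.+1 = xb D i + \sum_(j < N) (~~ rd j && (r j == i.+1)).
Proof.
rewrite /xb -big_split; apply: eq_bigr => j _ /=.
by case: (rd j); case: (ltngtP (r j) i.+1) => h //=; lia.
Qed.

Lemma tops_succ i : tops D i.+1 =
  tops D i ++ nseq (count (fun p : nat * nat => p.1 <= i.+1) (LL D)
                    - count (fun p : nat * nat => p.1 <= i) (LL D)) i.+1.
Proof.
have hs := filter_le_succ i LL_sorted.
rewrite /tops hs map_cat map_fst_eq; congr (_ ++ nseq _ _).
by rewrite -!size_filter hs size_cat addKn.
Qed.

Lemma mem_LL p : p \in LL D -> exists j, [/\ j < N, rd j & p = (r j, len (nth Blue D j))].
Proof.
case/mapP => j; rewrite mem_filter mem_sw => /andP[h1 h2] ->.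
by exists j.
Qed.

Lemma tops_all i : (forall j, j < N -> rd j -> r j <= i) -> tops D i = map fst (LL D).
Proof.
move=> H; rewrite /tops; congr (map fst _); apply/all_filterP/allP => p /mem_LL [j [h1 h2 ->]].
exact: H.
Qed.

Lemma tops_K i : K <= i -> tops D i = map fst (LL D).
Proof.
move=> hK; apply: tops_all => j hj hr.
by apply: ltnW; apply: leq_trans (red_lt_K hj hr) hK.
Qed.

Lemma tops_stop i : K <= xb D i.+1 -> tops D i = map fst (LL D).
Proof.
move=> hK; apply: tops_all => j hj hr; rewrite leqNgt; apply/negP => hij.
have h2 : i.+1 < r j.+1 by apply: leq_trans (r_lt hj hr).
have [j' [_ h4 h5 h6]] := exists_blue hj h2.
have := xb_gt h4 h5 (_ : i.+1 < r j'); rewrite h6 ltnSn => /(_ isT).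
by rewrite ltnNge hK.
Qed.

Lemma sum_len_aux m : m <= N ->
  r m + \sum_(0 <= j < m) ~~ rd j = \sum_(0 <= j < m) rd j * len (nth Blue D j).
Proof.
elim: m => [|m IH] hm; first by rewrite !big_geq // r0.
rewrite !big_nat_recr //= -(IH (ltnW hm)).
case hr: (rd m).
  rewrite (r_red hm hr) /=; lia.
rewrite (r_blue hm (negbT hr)) /=; lia.
Qed.

Lemma sumn_red_lengths : sumn (red_lengths (sweep D)) = K.
Proof.
rewrite red_lengths_sweep /LL -map_comp sumnE big_map big_filter.
rewrite (perm_big _ (sw_perm D)).
have -> : iota 0 N = index_iota 0 N by rewrite /index_iota subn0.
rewrite big_mkcond /=.
rewrite (eq_bigr (fun j => rd j * len (nth Blue D j))); last first.
  by move=> j _; case: (rd j); rewrite /= ?mul1n ?mul0n.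
by rewrite -sum_len_aux // rN add0n K_sum big_mkord.
Qed.

Lemma bt_main f i : K <= i + f ->
  bounce_tops (sweep D) f i (xb D i) (tops D i) = map fst (LL D).
Proof.
elim: f i => [|f IH] i hf /=.
  by rewrite addn0 in hf; exact: tops_K.
rewrite hcells_tops -xb_succ sumn_red_lengths.
case: leqP => hK; first exact: tops_stop.
have hxi : xb D i < K by apply: leq_ltn_trans hK; rewrite xb_succ leq_addr.
rewrite (Nb_xb hK) (Nb_xb hxi).
rewrite -(count_LL (fun x => x <= i.+1)) -(count_LL (fun x => x <= i)) -tops_succ.
by apply: IH; rewrite addSnnS.
Qed.

Lemma xb0 : xb D 0 = 0.
Proof.
rewrite /xb big1 // => j _; case hb: (rd j) => //=.
by have := blue_r (ltn_ord j) (negbT hb); case: (r j).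
Qed.

Lemma main2 : area D = Posz (bounce (sweep D)).
Proof.
case: (posnP K) => hK.
  have hN : N = 0.
    apply/eqP; rewrite -leqn0 leqNgt; apply/negP => hN.
    case hr: (rd 0).
      by have := red_lt_K hN hr; rewrite hK.
    have : 0 < K by rewrite K_sum (bigD1 (Ordinal hN)) //= hr.
    by rewrite hK.
  have -> : D = [::] by apply: size0nil.
  by rewrite /area /bounce /= /hcells !big_ord0.
rewrite /bounce sumn_red_lengths.
have e0 : nseq (Nb (sweep D) 0) 0 = tops D 0.
  rewrite -{1}xb0 Nb_xb ?xb0 // -(count_LL (fun x => x <= 0)).
  rewrite /tops (eq_filter (a2 := fun p : nat * nat => p.1 == 0)) ?map_fst_eq.
    by rewrite (eq_count (a2 := fun p : nat * nat => p.1 == 0)) // => p; rewrite leqn0.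
  by move=> p; rewrite leqn0.
rewrite e0 -{2}xb0 bt_main //.
rewrite sumnE big_map /LL big_map big_filter (perm_big _ (sw_perm D)).
have -> : iota 0 N = index_iota 0 N by rewrite /index_iota subn0.
rewrite big_mkord /area Posz_sum; apply: eq_bigr => j hj /=.
by rewrite rE.
Qed.

End Closed.

Lemma sum_value D : (\sum_(s <- D) value s)%R =
  (Posz (sumn (red_lengths D)) - Posz (count (fun s => ~~ is_red s) D))%R.
Proof.
elim: D => [|s D IH]; first by rewrite big_nil.
rewrite big_cons IH /red_lengths; case: s => [k|] /=; rewrite ?PoszD; lia.
Qed.

Lemma len_in_red_lengths D i : i < size D -> is_red (nth Blue D i) ->
  len (nth Blue D i) \in red_lengths D.
Proof.
elim: D i => [|s D IH] [|i] //=.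
  by case: s => //= k _ _; rewrite /red_lengths /= inE eqxx.
move=> hi hr; have := IH i hi hr; rewrite /red_lengths /=.
by case: (is_red s) => //= h; rewrite inE h orbT.
Qed.

Unset Implicit Arguments.
Local Open Scope ring_scope.

Theorem theorem2p1 (k : seq nat) (Dbar : seq step) :
  all (fun x => (0 < x)%N) k ->
  in_DK k Dbar ->
  dinv Dbar = area (sweep Dbar) /\ area Dbar = (bounce (sweep Dbar))%:Z.
Proof.
move=> hk [kv' [hperm /and3P[/eqP hrl /eqP hcnt hall]]].
have Hnn : forall m, 0 <= rank Dbar m.
  move=> m; case: (leqP m (size Dbar)) => hm.
    by move/allP: hall; apply; rewrite mem_iota add0n ltnS hm.
  rewrite rank_over ?(ltnW hm) //.
  by move/allP: hall; apply; rewrite mem_iota add0n ltnS leqnn.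
have Hend : rank Dbar (size Dbar) = 0.
  by rewrite /rank take_size sum_value hrl hcnt subrr.
have Hpos : forall i, (i < size Dbar)%N -> red Dbar i -> (0 < len (nth Blue Dbar i))%N.
  move=> i hi hr.
  have : len (nth Blue Dbar i) \in kv'.
    by rewrite -hrl; apply: len_in_red_lengths.
  rewrite -(perm_mem hperm) => hin.
  by move/allP: hk => /(_ _ hin).
split; first exact: main1.
exact: main2.
Qed.
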